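(* Let $\mathcal{D}$ be a DAG on vertex set $[p]$, let $\mathcal{V} \subseteq [p]$, and let $k \in \mathcal{V}$. Then the fill edge set of $k$ over $\mathcal{V}$ consists exactly of the pairs of neighbors of $k$ in $\mathcal{M}_{\mathcal{V}}(\mathcal{D})$ that are not adjacent to each other in $\mathcal{M}_{\mathcal{V}}(\mathcal{D})$: \[ \mathcal{F}_{\mathcal{D}}(\mathcal{V}, k) = \{\, i - j \;:\; i \neq j,\ i, j \in \mathrm{nbr}_{\mathcal{M}_{\mathcal{V}}(\mathcal{D})}(k),\ i \not\sim_{\mathcal{M}_{\mathcal{V}}(\mathcal{D})} j \,\}. \]
   Context: For a DAG $\mathcal{D}$ on $[p]$ and $i, j \in [p]$, $S \subseteq [p]\setminus\{i,j\}$, write $i \perp\!\!\!\perp_{\mathcal{D}} j \mid S$ if $i$ and $j$ are d-separated given $S$ in $\mathcal{D}$, and $i \not\perp\!\!\!\perp_{\mathcal{D}} j \mid S$ if they are d-connected. For $\mathcal{V} \subseteq [p]$, the moral subgraph $\mathcal{M}_{\mathcal{V}}(\mathcal{D})$ is the undirected graph with vertex set $\mathcal{V}$ and edge set $\{ i - j : i \neq j \in \mathcal{V},\ i \not\perp\!\!\!\perp_{\mathcal{D}} j \mid \mathcal{V}\setminus\{i,j\}\}$. For an undirected graph $\mathcal{G}$ and vertex set $W$, $\mathcal{G}[W]$ is the induced subgraph on $W$; $\mathrm{nbr}_{\mathcal{G}}(k)$ is the set of neighbors of $k$ in $\mathcal{G}$, and $i \sim_{\mathcal{G}} j$ means $i,j$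 are adjacent in $\mathcal{G}$. Write $\mathcal{V}\setminus k := \mathcal{V}\setminus\{k\}$. The fill edge set of $k$ over $\mathcal{V}$ is the set of edges $\mathcal{F}_{\mathcal{D}}(\mathcal{V}, k) = \mathcal{M}_{\mathcal{V}\setminus k}(\mathcal{D}) \setminus \mathcal{M}_{\mathcal{V}}(\mathcal{D})[\mathcal{V}\setminus k]$ (edges present in the moral subgraph on $\mathcal{V}\setminus k$ but absent from the induced subgraph of $\mathcal{M}_{\mathcal{V}}(\mathcal{D})$ on $\mathcal{V}\setminus k$). *)

(* Defs.v *)
(* Directed graphs on the vertex set [p] = 'I_p, given by an
   edge relation  e : rel 'I_p  (e a b  means  a -> b). *)
From mathcomp Require Import all_boot.
Set Implicit Arguments. Unset Strict Implicit. Unset Printing Implicit Defensive.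

Section Graphs.
Variable T : finType.
Variable e : rel T.

Definition acyclic : Prop := forall x : T, ~~ [exists y, e x y && connect e y x].

Definition skel : rel T := fun a b => e a b || e b a.

Definition collider (a b c : T) : bool := e a b && e c b.

Definition triple_open (S : {set T}) (a b c : T) : bool :=
  if collider a b c then [exists d in S, connect e b d] else b \notin S.

Fixpoint triples_open (S : {set T}) (a b : T) (s : seq T) : bool :=
  match s with
  | [::] => true
  | c :: s' => triple_open S a b c && triples_open S b c s'
  end.

(* the path  i :: s  (a simple path in the skeleton from i to j) is active given S *)
Definition active_path (S : {set T}) (i j : T) (s : seq T) : bool :=
  [&& path skel i s, last i s == j, uniq (i :: s) &
      match s with [::] => true | b :: s' => triples_open S i b s' end].

Definition dconnected (S : {set T}) (i j : T) : Prop :=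
  exists s : seq T, active_path S i j s.

Definition dseparated (S : {set T}) (i j : T) : Prop := ~ dconnected S i j.

(* Moral subgraph M_V(D): an undirected graph on V, given by its (symmetric)
   adjacency relation; i - j is an edge iff i <> j in V and i, j are
   d-connected given V \ {i,j}. *)
Definition moral (V : {set T}) (i j : T) : Prop :=
  [/\ i \in V, j \in V, i != j & dconnected (V :\ i :\ j) i j].

Definition induced (G : T -> T -> Prop) (W : {set T}) (i j : T) : Prop :=
  [/\ i \in W, j \in W & G i j].

Definition nbr (G : T -> T -> Prop) (k : T) (i : T) : Prop := G k i.

Definition fill (V : {set T}) (k : T) (i j : T) : Prop :=
  moral (V :\ k) i j /\ ~ induced (moral V) (V :\ k) i j.

End Graphs.

(* Main.v *)
Require Import Defs.
From mathcomp Require Import all_boot.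
From mathcomp Require Import zify.
Set Implicit Arguments. Unset Strict Implicit. Unset Printing Implicit Defensive.

Section Proof.
Variable T : finType.
Variable e : rel T.
Hypothesis acyc : acyclic e.

Definition An (S : {set T}) (b : T) := [exists d in S, connect e b d].

Definition wok S (w : seq T) : bool :=
  match w with a :: b :: s => triples_open e S a b s | _ => true end.

Lemma wok3 S a b c s : wok S [:: a, b, c & s] = triple_open e S a b c && wok S [:: b, c & s].
Proof. by []. Qed.

Lemma wok_cons S a l : wok S (a :: l) =
  (match l with b :: c :: _ => triple_open e S a b c | _ => true end) && wok S l.
Proof. by case: l => [|b [|c l]]. Qed.

Lemma wok_suffix S p l : wok S (p ++ l) -> wok S l.
Proof. elim: p => // a p IH; rewrite cat_cons wok_cons => /andP[_]; exact: IH. Qed.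

Lemma wok_prefix S p l : wok S (p ++ l) -> wok S p.
Proof.
elim: p => // a p IH; rewrite cat_cons !wok_cons => /andP[H1 /IH ->].
move: H1; case: p {IH} => [|b [|c p]] //= ->; by rewrite ?andbT.
Qed.

Lemma wok_cat S p x y q : wok S (p ++ [:: x, y & q]) = wok S (p ++ [:: x; y]) && wok S [:: x, y & q].
Proof.
elim: p => [|a p IH]; first by [].
rewrite !cat_cons (wok_cons S a (p ++ _)) (wok_cons S a (p ++ [:: x; y])) IH andbA.
congr (_ && _ && _).
by case: p {IH} => [|b [|c p]].
Qed.

Lemma triple_sym S a b c : triple_open e S a b c = triple_open e S c b a.
Proof. by rewrite /triple_open /collider andbC. Qed.

Lemma wok_rev S w : wok S (rev w) = wok S w.
Proof.
elim: w => [|a l IH] //.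
case: l IH => [|b [|c l]] IH //.
have E : forall x y (l : seq T), rev [:: x, y & l] = rev l ++ [:: y; x].
  by move=> x y l'; rewrite !rev_cons -!cats1 -catA.
rewrite rev_cons E -cats1 -catA /= wok_cat -E IH wok3 /= andbT triple_sym andbC.
by [].
Qed.


Lemma An_connect S x y : connect e x y -> An S y -> An S x.
Proof.
move=> cxy /existsP[d /andP[dS cyd]]; apply/existsP; exists d.
by rewrite dS (connect_trans cxy cyd).
Qed.

Lemma An_mono (S S' : {set T}) x : S \subset S' -> An S x -> An S' x.
Proof.
move=> sub /existsP[d /andP[dS c]]; apply/existsP; exists d.
by rewrite (subsetP sub _ dS).
Qed.

Lemma noloop x y : e x y -> connect e y x -> False.
Proof.
move=> exy cyx; move/negP: (acyc x); apply; apply/existsP; exists y.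
by rewrite exy cyx.
Qed.

Lemma skel_dir x y : skel e x y -> ~~ e y x -> e x y.
Proof. by rewrite /skel => /orP[->|->]. Qed.

Lemma chain S : forall ys x y, e x y -> path (skel e) y ys ->
  wok S [:: x, y & ys] -> An S y \/ path e y ys.
Proof.
elim=> [|z ys IH] x y exy; first by right.
move=> /= /andP[syz pys] /andP[t w].
move: t; rewrite /triple_open /collider exy /=.
case: ifP => [ezy Hex | ezy _]; first by left.
have eyz : e y z by move: syz; rewrite /= ?/skel ezy orbF.
case: (IH y z eyz pys w) => [Az | pz].
  by left; apply: An_connect Az; exact: connect1.
by right; rewrite /= eyz.
Qed.

Lemma loopAn S a v l : e a v -> path (skel e) v l -> wok S [:: a, v & l] ->
  last v l = v -> l != [::] -> An S v.
Proof.
case: l => [|b ys] // eav /= /andP[svb pys] /andP[t w] lst _.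
move: t; rewrite /triple_open /collider eav /=; case: ifP => [ebv H | ebv _].
  exact: H.
have evb : e v b by move: svb; rewrite /= ?/skel ebv orbF.
case: (chain evb pys w) => [Ab | pb].
  by apply: An_connect Ab; exact: connect1.
by exfalso; apply: (noloop evb); apply/connectP; exists ys.
Qed.

Lemma dup_split (s : seq T) : ~~ uniq s -> exists p1 v p2 p3, s = p1 ++ v :: p2 ++ v :: p3.
Proof.
elim: s => [|a s IH] //=; rewrite negb_and negbK; case/orP => [/splitPr[p q] | /IH[p1 [v [p2 [p3 ->]]]]].
  by exists [::], a, p, q.
by exists (a :: p1), v, p2, p3.
Qed.

Lemma tri_nc S a v d : ~~ e a v || ~~ e d v -> triple_open e S a v d -> v \notin S.
Proof. by rewrite /triple_open /collider; case: (e a v); case: (e d v). Qed.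

Lemma w2p S : forall n x s, size s < n -> path (skel e) x s -> wok S (x :: s) ->
  exists s', [/\ path (skel e) x s', wok S (x :: s'), uniq (x :: s') & last x s' = last x s].
Proof.
elim=> [//|n IH] x s sz ps ws.
case U: (uniq (x :: s)); first by exists s.
case/dup_split: (negbT U) => p1 [v [p2 [p3 E]]].
case: p1 E => [|x' p1] /=.
  case=> Ex Es; subst x s.
  have sz' : size p3 < n by move: sz; rewrite size_cat /=; lia.
  have ps' : path (skel e) v p3 by move: ps; rewrite cat_path /= => /andP[_ /andP[_ ->]].
  have ws' : wok S (v :: p3) by exact: (@wok_suffix S (v :: p2) _ ws).
  case: (IH v p3 sz' ps' ws') => s' [H1 H2 H3 H4].
  by exists s'; split => //; rewrite H4 last_cat.
case=> Ex Es; subst x' s.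
have pv : path (skel e) v (p2 ++ v :: p3).
  by move: ps; rewrite cat_path /= => /andP[_ /andP[_ ->]].
have sz' : size (p1 ++ v :: p3) < n.
  by move: sz; rewrite /= ?size_cat /= ?size_cat /=; lia.
have ps' : path (skel e) x (p1 ++ v :: p3).
  move: ps; rewrite !cat_path /= => /andP[-> /andP[-> _]] /=.
  by move: pv; rewrite cat_path /= => /andP[_ /andP[_ ->]].
have ws' : wok S (x :: p1 ++ v :: p3).
  case: p3 ws pv {ps sz U sz' ps'} => [|d p3] ws pv.
    move: ws; have -> : x :: p1 ++ v :: p2 ++ [:: v] = (x :: p1 ++ [:: v]) ++ (p2 ++ [:: v]).
      by rewrite /= -catA.
    exact: wok_prefix.
  set a := last x p1.
  have E3 : forall rest, x :: p1 ++ rest = belast x p1 ++ a :: rest.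
    by move=> rest; rewrite -cat_cons lastI cat_rcons.
  move: ws; rewrite !E3 (wok_cat S _ a v (p2 ++ _)) (wok_cat S _ a v (d :: p3)) => /andP[-> W].
  have Wv : wok S [:: v, d & p3].
    exact: (@wok_suffix S [:: a, v & p2] _ W).
  rewrite wok3 Wv andbT /=.
  have Ew : [:: a, v & p2 ++ [:: v, d & p3]] = [:: a, v & p2 ++ [:: v]] ++ d :: p3.
    by rewrite /= -catA.
  rewrite /triple_open; case: ifP => col.
    move: col; rewrite /collider => /andP[eav _].
    apply: (@loopAn _ a v (p2 ++ [:: v])) => //.
    - by move: pv; rewrite -[v :: d :: p3]cat1s catA cat_path => /andP[].
    - by move: W; rewrite Ew; apply: wok_prefix.
    - by rewrite last_cat.
    - by case: p2 {Ew W pv}.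
  move/negbT: col; rewrite /collider negb_and => col.
  case/orP: col => col.
    move: W; rewrite Ew => /wok_prefix.
    case: p2 {Ew pv} => [|b p2] /= /andP[t _]; apply: (tri_nc _ t); by rewrite col.
  have E4 : v :: p2 ++ [:: v, d & p3] = belast v p2 ++ [:: last v p2, v, d & p3].
    by rewrite -cat_cons lastI cat_rcons.
  move: W; rewrite -[a :: _]/([:: a] ++ _) E4 catA => /wok_suffix; rewrite wok3 => /andP[t _].
  by apply: (tri_nc _ t); rewrite col orbT.
case: (IH x _ sz' ps' ws') => s' [H1 H2 H3 H4].
by exists s'; split => //; rewrite H4 !last_cat /= ?last_cat.
Qed.

Lemma dirpath (A : {set T}) : forall t x y, e x y -> path e y t ->
  (forall u, connect e y u -> u \notin A) -> wok A [:: x, y & t].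
Proof.
elim=> [|z t IH] x y exy //= /andP[eyz pt] H.
apply/andP; split; last first.
  by apply: (IH y z eyz pt) => u cz; apply: H; apply: connect_trans (connect1 eyz) cz.
rewrite /triple_open /collider exy /=.
case: ifP => ezy; first by exfalso; apply: (noloop eyz); exact: connect1.
exact: H (connect0 _ _).
Qed.

Lemma fixw (S' A : {set T}) j : A \subset S' -> (forall z, An S' z -> ~~ An A z -> connect e z j) ->
  forall r y z, path (skel e) y (z :: r) -> wok S' [:: y, z & r] ->
  wok A [:: y, z & r] \/ exists t, [/\ path (skel e) y (z :: t), wok A [:: y, z & t] & last z t = j].
Proof.
move=> sub hS; elim=> [|w r IH] y z ps ws; first by left.
case/andP: ps => syz pz; move: ws; rewrite wok3 => /andP[tS wS].
case TA: (triple_open e A y z w).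
  case: (IH z w pz wS) => [W | [t [pt wt lt]]].
    by left; rewrite wok3 TA.
  by right; exists (w :: t); split => //=; rewrite ?syz //; apply/andP; split.
move: TA tS; rewrite /triple_open; case: ifP => col TA tS; last first.
  by move: TA; rewrite (contra (subsetP sub z) tS).
have eyz : e y z by move: col; rewrite /collider => /andP[].
have /connectP [t pt lt] := hS z tS (negbT TA).
right; exists t; split.
- rewrite /= syz /=; apply: sub_path pt => a b eab; by rewrite /skel eab.
- apply: dirpath => // u czu; apply/negP => uA; move/negbT/negP: TA; apply.
  by apply/existsP; exists u; rewrite uA.
- by [].
Qed.

Lemma fixw' (S' A : {set T}) j : A \subset S' -> (forall z, An S' z -> ~~ An A z -> connect e z j) ->
  forall r y, path (skel e) y r -> wok S' (y :: r) ->
  wok A (y :: r) \/ exists t, [/\ path (skel e) y t, wok A (y :: t) & last y t = j].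
Proof.
move=> sub hS [|z r] y ps ws; first by left.
case: (fixw sub hS ps ws) => [W | [t [pt wt lt]]]; first by left.
by right; exists (z :: t).
Qed.

Lemma An_U1 (A : {set T}) x z : An (x |: A) z -> ~~ An A z -> connect e z x.
Proof.
move=> /existsP[d /andP[dS c]] nA; move: dS; rewrite in_setU1 => /orP[/eqP <- //|dA].
by move/negP: nA; case; apply/existsP; exists d; rewrite dA.
Qed.

Lemma wok_mono (S S' : {set T}) x l : S \subset S' ->
  (forall y, y \in l -> y \in S' -> y \in S) -> wok S (x :: l) -> wok S' (x :: l).
Proof.
move=> sub; elim: l x => [|y l IH] x H //.
case: l IH H => [|z l] IH H //.
rewrite !wok3 => /andP[t w]; apply/andP; split; last first.
  by apply: IH w => u uin; apply: H; rewrite inE uin orbT.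
move: t; rewrite /triple_open; case: ifP => _; first exact: An_mono.
by apply: contra; apply: H; rewrite inE eqxx.
Qed.

Lemma walk_dconn S i s : path (skel e) i s -> wok S (i :: s) -> dconnected e S i (last i s).
Proof.
move=> ps ws; case: (w2p (n := (size s).+1) (leqnn _) ps ws) => s' [p' w' u' l'].
by exists s'; rewrite /active_path p' u' l' eqxx /=.
Qed.

Lemma dconn_walk S i j : dconnected e S i j ->
  exists s, [/\ path (skel e) i s, wok S (i :: s), uniq (i :: s) & last i s = j].
Proof. by case=> s /and4P[ps /eqP l u w]; exists s. Qed.

Lemma revE (x : T) s : last x s :: rev (belast x s) = rev (x :: s).
Proof. by rewrite [in RHS]lastI rev_rcons. Qed.

Lemma rev_walk S i s : path (skel e) i s -> wok S (i :: s) -> uniq (i :: s) ->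
  [/\ path (skel e) (last i s) (rev (belast i s)), wok S (last i s :: rev (belast i s)),
      uniq (last i s :: rev (belast i s)) & last (last i s) (rev (belast i s)) = i].
Proof.
move=> ps ws us; split.
- rewrite rev_path; apply: sub_path ps => a b; by rewrite /skel orbC.
- by rewrite revE wok_rev.
- by rewrite revE rev_uniq.
- have H : last i (last i s :: rev (belast i s)) = i by rewrite revE rev_cons last_rcons.
  exact: H.
Qed.

Lemma dconn_sym S i j : dconnected e S i j -> dconnected e S j i.
Proof.
case/dconn_walk => s [ps ws us ls]; case: (rev_walk ps ws us); rewrite ls => p' w' u' l'.
by exists (rev (belast i s)); rewrite /active_path p' u' l' eqxx /=.
Qed.

Lemma setD1C (V : {set T}) x y : V :\ x :\ y = V :\ y :\ x.
Proof. by apply/setP=> z; rewrite !inE andbCA. Qed.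

Lemma forward (V : {set T}) k i j : k \in V -> fill e V k i j ->
  [/\ i != j, nbr (moral e V) k i, nbr (moral e V) k j & ~ moral e V i j].
Proof.
move=> kV [[iVk jVk nij D] nI].
have nM : ~ moral e V i j by move=> M; apply: nI; split.
move: iVk jVk; rewrite !in_setD1 => /andP[nik iV] /andP[njk jV].
set A := V :\ k :\ i :\ j.
have E1 : V :\ k :\ i = j |: A by rewrite setD1K // !in_setD1 (eq_sym j i) nij njk jV.
have E2 : V :\ k :\ j = i |: A by rewrite /A (setD1C (V :\ k) i j) setD1K // !in_setD1 nij nik iV.
have E3 : V :\ i :\ j = k |: A.
  by rewrite /A (setD1C V k i) (setD1C (V :\ i) k j) setD1K // !in_setD1 (eq_sym k j) njk (eq_sym k i) nik kV.
case/dconn_walk: D => s [ps ws us ls].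
have kin : k \in s.
  apply/negP => kns; apply: nM; split => //; rewrite E3 -ls; apply: walk_dconn => //.
  apply: wok_mono ws; first exact: subsetUr.
  move=> y ys; rewrite in_setU1 => /orP[/eqP ye|//].
  by move: kns; rewrite -ye ys.
case/splitPr: kin ps ws us ls => p q ps ws us ls.
have ls' : last k q = j by rewrite -ls last_cat.
move: us; rewrite -[i :: _]/([:: i] ++ _) catA cat_uniq => /and3P[u1 dis u2].
have jp : j \notin [:: i] ++ p.
  apply/negP => jp; move/hasP: dis; apply; exists j => //; rewrite -ls'; exact: mem_last.
split => //.
- split => //; first by rewrite eq_sym.
  rewrite E1; apply: dconn_sym.
  have -> : k = last i (p ++ [:: k]) by rewrite last_cat.
  apply: walk_dconn.
    by move: ps; rewrite !cat_path /= => /andP[-> /andP[-> _]].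
  apply: wok_mono (subsetUr _ _) _ _.
    move=> y; rewrite mem_cat in_setU1 => yin /orP[/eqP ye|//]; subst y.
    case/orP: yin => [jin|]; first by rewrite mem_cat jin orbT in jp.
    by rewrite inE => /eqP jk; rewrite jk eqxx in njk.
  apply: (@wok_prefix A (i :: p ++ [:: k]) q).
  have -> : (i :: p ++ [:: k]) ++ q = i :: p ++ k :: q by rewrite cat_cons -catA.
  exact: ws.
- split => //; first by rewrite eq_sym.
  rewrite E2 -ls'; apply: walk_dconn.
    by move: ps; rewrite cat_path /= => /andP[_ /andP[_ ->]].
  apply: wok_mono (subsetUr _ _) _ _.
    move=> y yin; rewrite in_setU1 => /orP[/eqP ye|//]; subst y.
    move/hasP: dis; case; exists i; first by rewrite inE yin orbT.
    by rewrite /= inE eqxx.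
  exact: (@wok_suffix _ (i :: p) _ ws).
Qed.

Lemma backward (V : {set T}) k i j : moral e V k i -> moral e V k j -> ~ moral e V i j ->
  i != j -> dconnected e (V :\ k :\ i :\ j) i j.
Proof.
move=> [kV iV nki D1] [_ jV nkj D2] nM nij.
have nik : i != k by rewrite eq_sym.
have njk : j != k by rewrite eq_sym.
set A := V :\ k :\ i :\ j.
have E1 : V :\ k :\ i = j |: A by rewrite setD1K // !in_setD1 (eq_sym j i) nij njk jV.
have E2 : V :\ k :\ j = i |: A by rewrite /A (setD1C (V :\ k) i j) setD1K // !in_setD1 nij nik iV.
have E3 : V :\ i :\ j = k |: A.
  by rewrite /A (setD1C V k i) (setD1C (V :\ i) k j) setD1K // !in_setD1 (eq_sym k j) njk (eq_sym k i) nik kV.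
have kA : k \notin A by rewrite !inE eqxx !andbF.
rewrite E1 in D1; rewrite E2 in D2.
case: (dconn_walk D1) => s1 [p1 w1 u1 l1].
case: (dconn_walk D2) => s2 [p2 w2 u2 l2].
case: (rev_walk p1 w1 u1); rewrite l1 => rp1 rw1 _ rl1.
case: (rev_walk p2 w2 u2); rewrite l2 => rp2 rw2 _ rl2.
have hS : forall x z, An (x |: A) z -> ~~ An A z -> connect e z x by move=> x z; exact: An_U1.
case: (fixw' (subsetUr _ _) (hS j) rp1 rw1) => [W1 | [t [pt wt lt]]]; last first.
  by rewrite -lt; apply: walk_dconn.
case: (fixw' (subsetUr _ _) (hS i) rp2 rw2) => [W2 | [t [pt wt lt]]]; last first.
  by apply: dconn_sym; rewrite -lt; apply: walk_dconn.
have W1' : wok A (k :: s1) by rewrite -wok_rev -(revE k s1) l1.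
have W2' : wok A (k :: s2) by rewrite -wok_rev -(revE k s2) l2.
case: s1 p1 w1 u1 l1 rp1 rw1 rl1 W1 W1' => [|b s1] p1 w1 u1 l1 rp1 rw1 rl1 W1 W1'.
  by rewrite /= in l1; rewrite l1 eqxx in nki.
case: s2 p2 w2 u2 l2 rp2 rw2 rl2 W2 W2' => [|d s2] p2 w2 u2 l2 rp2 rw2 rl2 W2 W2'.
  by rewrite /= in l2; rewrite l2 eqxx in nkj.
set t0 := rev (belast k (b :: s1)) ++ d :: s2.
have pt0 : path (skel e) i t0 by rewrite /t0 cat_path rp1 rl1.
have lt0 : last i t0 = j by rewrite /t0 last_cat rl1.
have Et : i :: t0 = rev s1 ++ [:: b, k, d & s2].
  have -> : i :: t0 = rev [:: k, b & s1] ++ d :: s2 by rewrite /t0 -revE l1.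
  by rewrite !rev_cons -!cats1 -!catA.
have Er : forall S, wok S (rev s1 ++ [:: b; k]) = wok S [:: k, b & s1].
  by move=> S; rewrite -[RHS]wok_rev !rev_cons -!cats1 -!catA.
case TA: (triple_open e A b k d).
  rewrite -lt0; apply: walk_dconn => //.
  by rewrite Et wok_cat Er W1' wok3 TA.
exfalso; apply: nM; split => //.
rewrite E3 -lt0; apply: walk_dconn => //.
rewrite Et wok_cat Er wok3.
apply/and3P; split.
- apply: wok_mono W1'; first exact: subsetUr.
  move=> y yin; rewrite in_setU1 => /orP[/eqP ye|//]; subst y.
  by move: u1; rewrite /= yin.
- move: TA; rewrite /triple_open; case: ifP => _ TA'; last by rewrite kA in TA'.
  by apply/existsP; exists k; rewrite setU11 connect0.
- apply: wok_mono W2'; first exact: subsetUr.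
  move=> y yin; rewrite in_setU1 => /orP[/eqP ye|//]; subst y.
  by move: u2; rewrite /= yin.
Qed.

End Proof.

Theorem proposition1 (p : nat) (e : rel 'I_p) (V : {set 'I_p}) (k : 'I_p) :
  acyclic e -> k \in V ->
  forall i j : 'I_p,
    fill e V k i j <->
    [/\ i != j, nbr (moral e V) k i, nbr (moral e V) k j & ~ moral e V i j].
Proof.
move=> acyc kV i j; split; first exact: forward.
move=> [nij Mki Mkj nM]; split.
  have [_ iV nki _] := Mki; have [_ jV nkj _] := Mkj.
  split => //; rewrite ?in_setD1 ?iV ?jV 1?eq_sym ?nki ?nkj //.
  exact: backward.
by move=> [_ _ M].
Qed.
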